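(* Let $n\ge4$ and let $W_n$ be the wheel graph on $n$ vertices with signless Laplacian matrix \[Q=\left[\begin{array}{c|c} n-1 & \mathbf{1}^T \\ \hline \mathbf{1} & B \end{array}\right],\] where $B$ is the circulant matrix $\mathrm{circ}(3,1,0,\ldots,0,1)$ of order $n-1$. Then the Moore–Penrose inverse of $Q$ is \[Q^+=\frac{1}{4(n-1)} \left[\begin{array}{r|c} 5 & -\mathbf{1}^T \\ \hline -\mathbf{1} & J_{n-1}+2X \end{array}\right],\] where, with $C=\mathrm{circ}(1,0,\ldots,0,1)$ of order $n-1$, $X=2(CC^T+I_{n-1})^{-1}\left[ (n-1)I_{n-1}-J_{n-1}\right]=\mathrm{circ}(b_0,b_1,\ldots,b_{n-2})$ with, for $j=0,\ldots,n-2$, \[b_j=-\frac{2}{5}+\frac{2^{n-j}(n-1)}{\sqrt{5}}\left[\frac{(-3+\sqrt{5})^j}{2^{n-1}-(-3+\sqrt{5})^{n-1}}-\frac{(-3-\sqrt{5})^j}{2^{n-1}-(-3-\sqrt{5})^{n-1}}\right].\]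
   Context: The wheel graph $W_n$ ($n\ge4$) is a cycle on $n-1$ vertices together with a hub vertex adjacent to every cycle vertex; in the displayed form the hub is listed first and the cycle vertices follow in cyclic order. The signless Laplacian is $Q=D+A$, where $A$ is the adjacency matrix and $D$ the diagonal degree matrix. For $c_0,\dots,c_{k-1}$, $\mathrm{circ}(c_0,\ldots,c_{k-1})$ denotes the $k\times k$ circulant matrix whose $(i,j)$-entry is $c_{(j-i)\bmod k}$. $\mathbf 1$ is the all-ones column vector of length $n-1$, $J_{n-1}$ the $(n-1)\times(n-1)$ all-ones matrix, $I_{n-1}$ the identity. The Moore–Penrose inverse $A^+$ of a real matrix $A$ is the unique matrix with $AA^+A=A$, $A^+AA^+=A^+$, $(AA^+)^T=AA^+$, $(A^+A)^T=A^+A$. *)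

(* Defs.v *)
From mathcomp Require Import all_boot all_order all_algebra.
Set Implicit Arguments. Unset Strict Implicit. Unset Printing Implicit Defensive.
Import Order.TTheory GRing.Theory Num.Theory.
Local Open Scope ring_scope.

Definition is_moore_penrose (R : nzRingType) (m k : nat)
  (A : 'M[R]_(m, k)) (P : 'M[R]_(k, m)) : Prop :=
  [/\ A *m P *m A = A, P *m A *m P = P,
      (A *m P)^T = A *m P & (P *m A)^T = P *m A].

Definition circ (R : nzRingType) (k : nat) (c : nat -> R) : 'M[R]_k :=
  \matrix_(i < k, j < k) c ((j + k - i) %% k)%N.

(* Wheel graph W_n on vertices 'I_(1 + n.-1): vertex 0 is the hub,
   vertices 1..n-1 form a cycle in this cyclic order. *)
Definition cyc_adj (m a b : nat) : bool :=
  (((a.+1) %% m)%N == b) || (((b.+1) %% m)%N == a).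

Definition wheel_adj (n : nat) (i j : 'I_(1 + n.-1)) : bool :=
  (i != j) &&
  [|| (val i == 0%N), (val j == 0%N) | cyc_adj n.-1 (val i).-1 (val j).-1].

Arguments wheel_adj : clear implicits.

Definition wheel_A (R : nzRingType) (n : nat) : 'M[R]_(1 + n.-1) :=
  \matrix_(i < 1 + n.-1, j < 1 + n.-1) (wheel_adj n i j)%:R.

Definition wheel_D (R : nzRingType) (n : nat) : 'M[R]_(1 + n.-1) :=
  diag_mx (\row_(i < 1 + n.-1) (\sum_(j < 1 + n.-1) (wheel_adj n i j)%:R)).

Definition wheel_Q (R : nzRingType) (n : nat) : 'M[R]_(1 + n.-1) :=
  wheel_D R n + wheel_A R n.

Definition B_coef (R : nzRingType) (k : nat) (j : nat) : R :=
  if j == 0%N then 3 else if (j == 1%N) || (j == k.-1) then 1 else 0.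

Definition C_coef (R : nzRingType) (k : nat) (j : nat) : R :=
  if (j == 0%N) || (j == k.-1) then 1 else 0.

Definition Cmat (R : nzRingType) (n : nat) : 'M[R]_(n.-1) := circ n.-1 (C_coef R n.-1).

Definition Xmat (R : fieldType) (n : nat) : 'M[R]_(n.-1) :=
  2%:R *: (invmx (Cmat R n *m (Cmat R n)^T + 1%:M)
           *m ((n.-1)%:R *: 1%:M - const_mx 1)).

Definition b_coef (R : rcfType) (n j : nat) : R :=
  let s := Num.sqrt (5%:R : R) in
  - (2%:R / 5%:R) +
  (2%:R ^+ (n - j) * (n.-1)%:R / s) *
  ((-3%:R + s) ^+ j / (2%:R ^+ n.-1 - (-3%:R + s) ^+ n.-1)
   - (-3%:R - s) ^+ j / (2%:R ^+ n.-1 - (-3%:R - s) ^+ n.-1)).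

Definition Qplus (R : fieldType) (n : nat) : 'M[R]_(1 + n.-1) :=
  (4%:R * (n.-1)%:R)^-1 *:
  block_mx (5%:R%:M : 'M[R]_1) (- const_mx 1) (- const_mx 1)
           (const_mx 1 + 2%:R *: Xmat R n).

(* Main.v *)
Require Import Defs.
From mathcomp Require Import all_boot all_order all_algebra.
From mathcomp Require Import zify ring lra.
Import Order.TTheory GRing.Theory Num.Theory.
Local Open Scope ring_scope.

Lemma modn_2 x k : (x < k + k)%N -> (x %% k = if x < k then x else x - k)%N.
Proof.
case: ifP => h; first by rewrite modn_small.
move=> hx. have -> : x = ((x - k) + k)%N by lia.
rewrite modnDr modn_small; lia.
Qed.
Ltac splitifs :=
  repeat match goal with
  | |- context[if ?b then _ else _] => case: (boolP b) => ?
  | H : context[if ?b then _ else _] |- _ => move: H; case: (boolP b) => ? ?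
  end.
Ltac modsolve :=
  repeat (rewrite modn_2; last by lia);
  splitifs; try lia.

Definition Sh (R : nzRingType) k : 'M[R]_k := \matrix_(i, j) (ordS i == j)%:R.

Lemma Sh_mul (R : nzRingType) k m (M : 'M[R]_(k, m)) :
  Sh R k *m M = \matrix_(i, j) M (ordS i) j.
Proof.
apply/matrixP=> i j; rewrite !mxE (bigD1 (ordS i)) //= mxE eqxx mul1r.
rewrite big1 ?addr0 // => l /negbTE; rewrite mxE eq_sym => ->; by rewrite mul0r.
Qed.

Lemma ShT_mul (R : nzRingType) k m (M : 'M[R]_(k, m)) :
  (Sh R k)^T *m M = \matrix_(i, j) M (ord_pred i) j.
Proof.
apply/matrixP=> i j; rewrite !mxE (bigD1 (ord_pred i)) //= !mxE ord_predK eqxx mul1r.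
rewrite big1 ?addr0 // => l hl; rewrite !mxE.
case: eqP => [h|_]; last by rewrite mul0r.
by move: hl; rewrite -h ordSK eqxx.
Qed.

Lemma ShT_Sh (R : nzRingType) k : (Sh R k)^T *m Sh R k = 1%:M.
Proof.
rewrite ShT_mul; apply/matrixP=> i j; rewrite !mxE ord_predK.
by case: eqP.
Qed.

Lemma circE (R : nzRingType) k c i j : circ k c i j = c ((j + k - i) %% k)%N :> R.
Proof. by rewrite mxE. Qed.

Lemma nat_e0 k i j : (3 <= k)%N -> (i < k)%N -> (j < k)%N ->
  ((j + k - i) %% k == 0)%N = (i == j).
Proof. move=> *; apply/eqP/eqP; modsolve. Qed.
Lemma nat_em1 k i j : (3 <= k)%N -> (i < k)%N -> (j < k)%N ->
  ((j + k - i) %% k == k.-1)%N = (j.+1 %% k == i)%N.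
Proof. move=> *; apply/eqP/eqP; modsolve. Qed.
Lemma nat_e1 k i j : (3 <= k)%N -> (i < k)%N -> (j < k)%N ->
  ((j + k - i) %% k == 1)%N = (i.+1 %% k == j)%N.
Proof. move=> *; apply/eqP/eqP; modsolve. Qed.
Lemma nat_Sneq k i : (3 <= k)%N -> (i < k)%N -> (i.+1 %% k == i)%N = false.
Proof. move=> *; apply/eqP; modsolve. Qed.
Lemma nat_SSneq k i j : (3 <= k)%N -> (i < k)%N -> (j < k)%N ->
   (i.+1 %% k == j)%N -> (j.+1 %% k == i)%N = false.
Proof. move=> ? ? ? /eqP h; apply/eqP; move: h; modsolve. Qed.

Lemma ordS_neq k (i : 'I_k) : (3 <= k)%N -> (ordS i == i) = false.
Proof. by move=> h; apply: nat_Sneq. Qed.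

Lemma Cmat_Sh (R : nzRingType) n : (4 <= n)%N -> Cmat R n = 1%:M + (Sh R n.-1)^T.
Proof.
move=> hn; have hk : (3 <= n.-1)%N by lia.
apply/matrixP=> i j; rewrite /Cmat !mxE /C_coef.
have hi := ltn_ord i; have hj := ltn_ord j.
rewrite nat_e0 // nat_em1 //.
case: (eqVneq i j) => [->|hij]; first by rewrite eqxx /= ordS_neq // addr0.
rewrite (_ : (nat_of_ord i == nat_of_ord j) = false); last exact: negbTE hij.
rewrite /= add0r.
have -> : (ordS j == i) = ((j.+1 %% n.-1)%N == i) by []. by case: ifP.
Qed.

Lemma circB (R : nzRingType) k : (3 <= k)%N ->
  circ k (B_coef R k) = 3%:M + Sh R k + (Sh R k)^T.
Proof.
move=> hk; apply/matrixP=> i j; rewrite !mxE /B_coef.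
have hi := ltn_ord i; have hj := ltn_ord j.
rewrite nat_e0 // nat_e1 // nat_em1 //.
case: (eqVneq i j) => [->|hij]; first by rewrite eqxx /= !ordS_neq // !addr0.
rewrite (_ : (nat_of_ord i == nat_of_ord j) = false); last exact: negbTE hij.
have -> : (ordS j == i) = ((j.+1 %% k)%N == i) by [].
have -> : (ordS i == j) = ((i.+1 %% k)%N == j) by [].
rewrite /= mulr0n add0r.
case h1: ((i.+1 %% k)%N == j) => /=.
  by rewrite (@nat_SSneq k i j hk hi hj h1) addr0.
by rewrite add0r; case: ifP.
Qed.
Ltac fld := field; rewrite ?pnatr_eq0 //.

Definition sq5 (R : rcfType) : R := Num.sqrt 5%:R.
Definition ra (R : rcfType) : R := (-3%:R + sq5 R) / 2%:R.
Definition rb (R : rcfType) : R := (-3%:R - sq5 R) / 2%:R.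

Lemma sq5_sq (R : rcfType) : sq5 R * sq5 R = 5%:R.
Proof. by rewrite -expr2 sqr_sqrtr // ler0n. Qed.
Lemma sq5_gt0 (R : rcfType) : 0 < sq5 R.
Proof. by rewrite sqrtr_gt0 ltr0n. Qed.
Lemma sq5_bnd (R : rcfType) : 2%:R < sq5 R < 3%:R.
Proof. have h1 := sq5_sq R; have h2 := sq5_gt0 R. apply/andP; split; nra. Qed.

Lemma rab (R : rcfType) : ra R * rb R = 1.
Proof. rewrite /ra /rb. have h := sq5_sq R. 
have -> : (-3%:R + sq5 R) / 2%:R * ((-3%:R - sq5 R) / 2%:R) = (9%:R - sq5 R * sq5 R) / 4%:R :> R by fld.
rewrite h; fld. Qed.
Lemma ra_eq (R : rcfType) : ra R * ra R + 3%:R * ra R + 1 = 0.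
Proof. rewrite /ra. have h := sq5_sq R.
have -> : (-3%:R + sq5 R) / 2%:R * ((-3%:R + sq5 R) / 2%:R) + 3%:R * ((-3%:R + sq5 R) / 2%:R) + 1 = (sq5 R * sq5 R - 5%:R) / 4%:R :> R by fld.
by rewrite h subrr mul0r. Qed.
Lemma rb_eq (R : rcfType) : rb R * rb R + 3%:R * rb R + 1 = 0.
Proof. rewrite /rb. have h := sq5_sq R.
have -> : (-3%:R - sq5 R) / 2%:R * ((-3%:R - sq5 R) / 2%:R) + 3%:R * ((-3%:R - sq5 R) / 2%:R) + 1 = (sq5 R * sq5 R - 5%:R) / 4%:R :> R by fld.
by rewrite h subrr mul0r. Qed.
Lemma ra_sub_rb (R : rcfType) : ra R - rb R = sq5 R.
Proof. rewrite /ra /rb; fld. Qed.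
Lemma ra_add_rb (R : rcfType) : ra R + rb R = - 3%:R.
Proof. rewrite /ra /rb; fld. Qed.

Lemma raX_neq1 (R : rcfType) k : (0 < k)%N -> 1 - ra R ^+ k != 0.
Proof.
move=> hk; rewrite subr_eq0; apply/eqP => h.
have hb := sq5_bnd R; case/andP: hb => hb1 hb2.
have h0 : `|ra R| < 1 by rewrite /ra ltr_norml; apply/andP; split; lra.
have h1 : 0 <= `|ra R| by [].
have := exprn_ilt1 k h1 h0; rewrite -normrX -h normr1 ltxx; lia.
Qed.
Lemma rbX_neq1 (R : rcfType) k : (0 < k)%N -> 1 - rb R ^+ k != 0.
Proof.
move=> hk; apply/eqP => h; move: (@raX_neq1 R k hk); rewrite subr_eq0 => /eqP; apply.
have : ra R ^+ k * rb R ^+ k = 1 by rewrite -exprMn rab expr1n.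
move/eqP: h; rewrite subr_eq0 => /eqP <-; by rewrite mulr1.
Qed.

Definition gg (R : rcfType) k j : R :=
  (ra R ^+ j / (1 - ra R ^+ k) - rb R ^+ j / (1 - rb R ^+ k)) / sq5 R.

Lemma gg_rec (R : rcfType) k m : gg R k m.+2 + 3%:R * gg R k m.+1 + gg R k m = 0.
Proof.
rewrite /gg !exprS.
set A := 1 - ra R ^+ k; set B := 1 - rb R ^+ k; set x := ra R ^+ m; set y := rb R ^+ m.
have -> : (ra R * (ra R * x) / A - rb R * (rb R * y) / B) / sq5 R +
  3%:R * ((ra R * x / A - rb R * y / B) / sq5 R) + (x / A - y / B) / sq5 R =
  ((ra R * ra R + 3%:R * ra R + 1) * (x / A) - (rb R * rb R + 3%:R * rb R + 1) * (y / B)) / sq5 R by ring.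
by rewrite ra_eq rb_eq !mul0r subrr mul0r.
Qed.

Lemma gg_k (R : rcfType) k : (0 < k)%N -> gg R k k = gg R k 0.
Proof.
move=> hk; have hA := @raX_neq1 R k hk; have hB := @rbX_neq1 R k hk.
rewrite /gg !expr0; congr (_ / _).
set A := ra R ^+ k; set B := rb R ^+ k.
rewrite -[X in X = _](addrK (1 : R)). rewrite -addrA. 
apply/eqP; rewrite -subr_eq0; apply/eqP.
by field; rewrite hA hB.
Qed.

Lemma gg_first (R : rcfType) k : (0 < k)%N ->
  3%:R * gg R k 0 + gg R k 1 + gg R k k.-1 = 1.
Proof.
case: k => // k' _; have hA := @raX_neq1 R k'.+1 isT; have hB := @rbX_neq1 R k'.+1 isT.
rewrite /gg /= !exprS !expr0 ?expr1 ?mulr1 in hA hB *.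
set a := ra R; set b := rb R; set x := ra R ^+ k'; set y := rb R ^+ k'.
have e : 3%:R * ((1 / (1 - a * x) - 1 / (1 - b * y)) / sq5 R) +
    (a / (1 - a * x) - b / (1 - b * y)) / sq5 R + (x / (1 - a * x) - y / (1 - b * y)) / sq5 R
  = ((3%:R + a + x) / (1 - a * x) - (3%:R + b + y) / (1 - b * y)) / sq5 R by ring.
have e1 : 3%:R + a + x = - b * (1 - a * x).
  have -> : - b * (1 - a * x) = - b + (a * b) * x by ring.
  rewrite rab mul1r; have := ra_add_rb R; rewrite -/a -/b => h.
  have -> : -b = 3%:R + a by lra.
  by [].
have e2 : 3%:R + b + y = - a * (1 - b * y).
  have -> : - a * (1 - b * y) = - a + (a * b) * y by ring.
  rewrite rab mul1r; have := ra_add_rb R; rewrite -/a -/b => h.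
  have -> : -a = 3%:R + b by lra.
  by [].

rewrite e e1 e2 !mulfK // opprK addrC ra_sub_rb divff //.
exact: lt0r_neq0 (sq5_gt0 R).
Qed.

Lemma nat_t3 (k i j : nat) : (3 <= k)%N -> (i < k)%N -> (j < k)%N ->
  ((j + k - (i + k).-1 %% k) %% k =
   if (j + k - i) %% k == k.-1 then 0 else ((j + k - i) %% k).+1)%N.
Proof. move=> *. modsolve. Qed.
Lemma nat_t4 (k i j : nat) : (3 <= k)%N -> (i < k)%N -> (j < k)%N ->
  ((j + k - i.+1 %% k) %% k =
   if (j + k - i) %% k == 0 then k.-1 else ((j + k - i) %% k).-1)%N.
Proof. move=> *. modsolve. Qed.

Definition Fm (R : rcfType) k : 'M[R]_k := circ k (gg R k).

Lemma BF (R : rcfType) k : (3 <= k)%N ->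
  (3%:M + Sh R k + (Sh R k)^T) *m Fm R k = 1%:M.
Proof.
move=> hk; rewrite !mulmxDl mul_scalar_mx Sh_mul ShT_mul.
apply/matrixP=> i j; rewrite !mxE.
have hi := ltn_ord i; have hj := ltn_ord j.
rewrite /= nat_t3 // nat_t4 //.
have := @nat_e0 k i j hk hi hj.
have hd : ((j + k - i) %% k < k)%N by rewrite ltn_pmod //; lia.
set d := ((j + k - i) %% k)%N => e0; clearbody d.
rewrite (_ : (i == j) = (d == 0)%N); last exact: esym e0.
case: (eqVneq d 0) => [->|d0] /=.
  have -> : (0 == k.-1)%N = false by lia.
  have := @gg_first R k ltac:(lia); lra.
case: (eqVneq d k.-1) => [->|dk] /=.
  have := gg_rec R k k.-2; rewrite (_ : k.-2.+2 = k); last by lia.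
  rewrite (_ : k.-2.+1 = k.-1); last by lia.
  rewrite gg_k; last by lia.
  move=> h; lra.
have := gg_rec R k d.-1; rewrite (_ : d.-1.+2 = d.+1); last by lia.
rewrite (_ : d.-1.+1 = d); last by lia.
move=> h; lra.
Qed.

Lemma b_coefE (R : rcfType) k j : (0 < k)%N -> (j <= k)%N ->
  b_coef R k.+1 j = 2%:R * (k%:R * gg R k j - 5%:R^-1).
Proof.
move=> hk hj; have hA := @raX_neq1 R k hk; have hB := @rbX_neq1 R k hk.
have hs : sq5 R != 0 by exact: lt0r_neq0 (sq5_gt0 R).
rewrite /b_coef /= -/(sq5 R).
have -> : -3%:R + sq5 R = 2%:R * ra R by rewrite /ra; fld.
have -> : -3%:R - sq5 R = 2%:R * rb R by rewrite /rb; fld.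
rewrite /gg; move: hA hB; move: (ra R) (rb R) => a0 b0 hA hB.
rewrite subSn // exprS !exprMn.
have -> : (2%:R : R) ^+ k = 2%:R ^+ (k - j) * 2%:R ^+ j by rewrite -exprD subnK.
have h2 : (2%:R : R) ^+ j != 0 by rewrite expf_neq0 // pnatr_eq0.
have h2' : (2%:R : R) ^+ (k - j) != 0 by rewrite expf_neq0 // pnatr_eq0.
set a := a0 ^+ k in hA *. set b := b0 ^+ k in hB *.
have e : forall c d : R, c - c * d = c * (1 - d) by move=> c d; ring.
field; by rewrite hs hA hB !e !mulf_neq0.
Qed.

Definition Bm (R : nzRingType) k : 'M[R]_k := 3%:M + Sh R k + (Sh R k)^T.

Lemma CCT (R : nzRingType) n : (4 <= n)%N ->
  Cmat R n *m (Cmat R n)^T + 1%:M = Bm R n.-1.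
Proof.
move=> hn; rewrite Cmat_Sh // /Bm linearD /= trmx1 trmxK mulmxDl !mulmxDr ShT_Sh !mul1mx mulmx1.
have -> : (3%:M : 'M[R]_n.-1) = 1%:M + 1%:M + 1%:M.
  by rewrite -!raddfD /=; congr (_%:M); rewrite -!natr1 ?add0r.
set S := Sh R n.-1; set T := S^T; set I := (1%:M : 'M[R]_n.-1).
rewrite (addrC T I) !addrA [I + S + I]addrAC.
by rewrite (addrAC (I + I + S) T I) (addrAC (I + I) S I).
Qed.

Lemma circB' (R : nzRingType) n : (4 <= n)%N -> circ n.-1 (B_coef R n.-1) = Bm R n.-1.
Proof. move=> hn; apply: circB; lia. Qed.

Lemma FB (R : rcfType) k : (3 <= k)%N -> Fm R k *m Bm R k = 1%:M.
Proof. by move=> hk; apply: mulmx1C; apply: BF. Qed.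

Lemma Bunit (R : rcfType) k : (3 <= k)%N -> Bm R k \in unitmx.
Proof. by move=> hk; case: (mulmx1_unit (@BF R k hk)). Qed.

Lemma invB (R : rcfType) k : (3 <= k)%N -> invmx (Bm R k) = Fm R k.
Proof.
move=> hk; rewrite -[invmx _]mulmx1 -(@BF R k hk) mulmxA mulVmx ?mul1mx //.
exact: Bunit.
Qed.

Lemma const_eq (R : nzRingType) m p (a : R) :
  \matrix_(i < m, j < p) (const_mx a : 'M[R]_(m, p)) i j = const_mx a.
Proof. by apply/matrixP => i j; rewrite !mxE. Qed.

Lemma BJ (R : nzRingType) k p : (Bm R k) *m (const_mx 1 : 'M[R]_(k, p)) = 5%:R *: const_mx 1.
Proof.
rewrite /Bm !mulmxDl mul_scalar_mx Sh_mul ShT_mul.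
apply/matrixP => i j; by rewrite !mxE !mulr1 !natr1.
Qed.

Lemma JB (R : comNzRingType) k p : (const_mx 1 : 'M[R]_(p, k)) *m (Bm R k) = 5%:R *: const_mx 1.
Proof.
apply: trmx_inj; rewrite trmx_mul trmx_const.
have -> : (Bm R k)^T = Bm R k by rewrite /Bm !linearD /= trmxK tr_scalar_mx addrAC.
by rewrite BJ linearZ /= trmx_const.
Qed.

Lemma JJ (R : nzRingType) m p q :
  (const_mx 1 : 'M[R]_(m, p)) *m (const_mx 1 : 'M[R]_(p, q)) = p%:R *: const_mx 1.
Proof.
apply/matrixP => i j; rewrite !mxE.
under eq_bigr do rewrite !mxE mulr1.
by rewrite sumr_const card_ord mulr1.
Qed.

Lemma FJ (R : rcfType) k p : (3 <= k)%N ->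
  Fm R k *m (const_mx 1 : 'M[R]_(k, p)) = 5%:R^-1 *: const_mx 1.
Proof.
move=> hk; have h : Fm R k *m (Bm R k *m const_mx 1) = (const_mx 1 : 'M[R]_(k, p)).
  by rewrite mulmxA FB // mul1mx.
rewrite BJ -scalemxAr in h.
by rewrite -{2}h scalerA mulVf ?scale1r // pnatr_eq0.
Qed.

Lemma XmatE (R : rcfType) n : (4 <= n)%N ->
  Xmat R n = 2%:R *: ((n.-1)%:R *: Fm R n.-1 - 5%:R^-1 *: const_mx 1).
Proof.
move=> hn; have hk : (3 <= n.-1)%N by lia.
by rewrite /Xmat CCT // invB // mulmxBr -scalemxAr mulmx1 FJ.
Qed.

Lemma XmatC (R : rcfType) n : (4 <= n)%N -> Xmat R n = circ n.-1 (b_coef R n).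
Proof.
move=> hn; rewrite XmatE //; apply/matrixP => i j; rewrite !mxE.
have hk : (0 < n.-1)%N by lia.
have -> : b_coef R n = b_coef R n.-1.+1 by congr b_coef; lia.
rewrite b_coefE //; last by have := ltn_pmod (j + n.-1 - i) hk; lia.
by rewrite mulr1.
Qed.

Lemma adj_cyc n (i j : 'I_n.-1) : (4 <= n)%N ->
  wheel_adj n (rshift 1 i) (rshift 1 j) = (ordS i == j) || (ordS j == i).
Proof.
move=> hn; rewrite /wheel_adj /= /cyc_adj.
have hi := ltn_ord i; have hj := ltn_ord j.
have hk : (3 <= n.-1)%N by lia.
rewrite ?add0n.
case: (eqVneq i j) => [->|hij].
  by rewrite eqxx /=; apply/esym/negbTE; rewrite ordS_neq.
have -> : (rshift 1 i != rshift 1 j) = true.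
  apply/negP => /eqP /(congr1 val) /= h; move/negP: hij; apply; apply/eqP/val_inj; exact: addnI h.
by [].
Qed.

Lemma adj_hub_r n (i : 'I_1) (j : 'I_n.-1) : wheel_adj n (lshift n.-1 i) (rshift 1 j) = true.
Proof. by rewrite /wheel_adj /= (ord1 i) /=. Qed.
Lemma adj_hub_l n (i : 'I_1) (j : 'I_n.-1) : wheel_adj n (rshift 1 j) (lshift n.-1 i) = true.
Proof.
by rewrite /wheel_adj /= (ord1 i).
Qed.
Lemma adj_hub_hub n (i j : 'I_1) : wheel_adj n (lshift n.-1 i) (lshift n.-1 j) = false.
Proof. by rewrite /wheel_adj (ord1 i) (ord1 j) eqxx. Qed.

Lemma sum_eq1 (R : nzRingType) k (a : 'I_k) : \sum_(l < k) (a == l)%:R = 1 :> R.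
Proof.
rewrite (bigD1 a) //= eqxx big1 ?addr0 // => l hl.
by rewrite eq_sym (negbTE hl).
Qed.

Lemma cyc_ind (R : nzRingType) k (i j : 'I_k) : (3 <= k)%N ->
  ((ordS i == j) || (ordS j == i))%:R = (ordS i == j)%:R + (ordS j == i)%:R :> R.
Proof.
move=> hk; have hi := ltn_ord i; have hj := ltn_ord j.
case h1 : (ordS i == j) => /=; last by rewrite add0r.
have -> : (ordS j == i) = false by exact: (@nat_SSneq k i j hk hi hj h1).
by rewrite addr0.
Qed.

Lemma deg_cyc (R : nzRingType) n (i : 'I_n.-1) : (4 <= n)%N ->
  \sum_(l < 1 + n.-1) (wheel_adj n (rshift 1 i) l)%:R = 3%:R :> R.
Proof.
move=> hn; have hk : (3 <= n.-1)%N by lia.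
rewrite big_split_ord /= big_ord1 adj_hub_l.
under eq_bigr do rewrite adj_cyc // cyc_ind //.
rewrite big_split /= sum_eq1.
have -> : \sum_(l < n.-1) (ordS l == i)%:R = \sum_(l < n.-1) (ord_pred i == l)%:R :> R.
  apply: eq_bigr => l _.
  have -> : (ordS l == i) = (ord_pred i == l) by apply/idP/idP => /eqP <-; rewrite ?ordSK ?ord_predK.
  by [].
by rewrite sum_eq1 addrA !natr1.
Qed.

Lemma deg_hub (R : nzRingType) n (i : 'I_1) :
  \sum_(l < 1 + n.-1) (wheel_adj n (lshift n.-1 i) l)%:R = (n.-1)%:R :> R.
Proof.
rewrite big_split_ord /= big_ord1 adj_hub_hub add0r.
under eq_bigr do rewrite adj_hub_r.
by rewrite sumr_const card_ord.
Qed.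

Lemma wheelQ (R : nzRingType) n : (4 <= n)%N ->
  wheel_Q R n = block_mx ((n.-1)%:R%:M : 'M[R]_1) (const_mx 1) (const_mx 1) (Bm R n.-1).
Proof.
move=> hn; have hk : (3 <= n.-1)%N by lia.
rewrite -[wheel_Q R n]submxK; congr block_mx; apply/matrixP => i j; rewrite !mxE.
all: rewrite ?deg_hub ?deg_cyc // ?eq_lshift ?eq_rshift ?eq_lrshift ?eq_rlshift.
- by rewrite adj_hub_hub addr0.
- by rewrite adj_hub_r add0r.
- by rewrite adj_hub_l add0r.
- by rewrite adj_cyc // cyc_ind // addrA.
Qed.

Lemma JF (R : rcfType) k p : (3 <= k)%N ->
  (const_mx 1 : 'M[R]_(p, k)) *m Fm R k = 5%:R^-1 *: const_mx 1.
Proof.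
move=> hk; have h : (const_mx 1 *m Bm R k) *m Fm R k = (const_mx 1 : 'M[R]_(p, k)).
  by rewrite -mulmxA BF // mulmx1.
rewrite JB -scalemxAl in h.
by rewrite -{2}h scalerA mulVf ?scale1r // pnatr_eq0.
Qed.

Lemma JX (R : rcfType) n : (4 <= n)%N ->
  (const_mx 1 : 'M[R]_(1, n.-1)) *m Xmat R n = 0.
Proof.
move=> hn; have hk : (3 <= n.-1)%N by lia.
rewrite XmatE // -scalemxAr mulmxBr -!scalemxAr JF // JJ !scalerA mulrC subrr scaler0 //.
Qed.

Lemma BX (R : rcfType) n : (4 <= n)%N ->
  Bm R n.-1 *m Xmat R n = 2%:R *: ((n.-1)%:R *: 1%:M - const_mx 1).
Proof.
move=> hn; have hk : (3 <= n.-1)%N by lia.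
by rewrite XmatE // -scalemxAr mulmxBr -!scalemxAr BF // BJ !scalerA mulVf ?scale1r // ?pnatr_eq0.
Qed.

Lemma const11 (R : nzRingType) (a : R) : (const_mx a : 'M[R]_1) = a%:M.
Proof. by apply/matrixP => i j; rewrite !mxE (ord1 i) (ord1 j) eqxx mulr1n. Qed.

Lemma QQp (R : rcfType) n : (4 <= n)%N -> wheel_Q R n *m Qplus R n = 1%:M.
Proof.
move=> hn; have hk : (3 <= n.-1)%N by lia.
rewrite wheelQ // /Qplus -scalemxAr mulmx_block.
move: (@JX R n hn) (@BX R n hn); move: (Xmat R n) => X jx bx.
rewrite !mulmxN !mulmxDr -!scalemxAr jx bx !BJ !JJ !mul_scalar_mx !mul_mx_scalar const11.
rewrite (scalar_mx_block 1 n.-1) scale_block_mx.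
have hk0 : (n.-1)%:R != 0 :> R by rewrite pnatr_eq0; lia.
congr block_mx; apply/matrixP => i j; rewrite !mxE.
- rewrite (ord1 i) (ord1 j) eqxx /= mulr1n; by fld; lia.
- by rewrite !mulr1 mulr0 addr0 addNr mulr0.
- by rewrite subrr mulr0.
- case: (i == j); rewrite /=; by fld; lia.
Qed.

Theorem mainTheorem5 (R : rcfType) (n : nat) (hn : (4 <= n)%N) :
  [/\ wheel_Q R n =
        block_mx ((n.-1)%:R%:M : 'M[R]_1) (const_mx 1) (const_mx 1)
                 (circ n.-1 (B_coef R n.-1)),
      (Cmat R n *m (Cmat R n)^T + 1%:M) \in unitmx,
      Xmat R n = circ n.-1 (b_coef R n)
    & forall P : 'M[R]_(1 + n.-1),
        is_moore_penrose (wheel_Q R n) P <-> P = Qplus R n].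
Proof.
have hk : (3 <= n.-1)%N by lia.
have h1 := @QQp R n hn.
have h2 := mulmx1C h1.
split.
- by rewrite circB' // wheelQ.
- by rewrite CCT //; apply: Bunit.
- exact: XmatC.
move=> P; split.
- case=> hP _ _ _.
  transitivity (Qplus R n *m (wheel_Q R n *m P *m wheel_Q R n) *m Qplus R n).
    by rewrite !mulmxA h2 mul1mx -mulmxA h1 mulmx1.
  by rewrite hP -mulmxA h1 mulmx1.
- move=> ->; split.
  + by rewrite h1 mul1mx.
  + by rewrite h2 mul1mx.
  + by rewrite h1 trmx1.
  + by rewrite h2 trmx1.
Qed.
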